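(* Let $G_1$ and $G_2$ be groups, and for $t=1,2$ let $\vec H^{(t)}\colon\{1\}=H^{(t)}_0\triangleleft\dots\triangleleft H^{(t)}_n=G_t$ and $\vec K^{(t)}\colon\{1\}=K^{(t)}_0\triangleleft\dots\triangleleft K^{(t)}_n=G_t$ be composition series of $G_t$ (of the same length $n$). Let $\pi_t$ be the unique permutation of $\{1,\dots,n\}$ such that $H^{(t)}_i/H^{(t)}_{i-1}$ is subnormally down-and-up projective to $K^{(t)}_{\pi_t(i)}/K^{(t)}_{\pi_t(i)-1}$ for all $i$. If $\pi_1=\pi_2$, then the lattices $(\mathrm{CSL}(\vec H^{(1)},\vec K^{(1)});\subseteq)$ and $(\mathrm{CSL}(\vec H^{(2)},\vec K^{(2)});\subseteq)$ are isomorphic. That is, this permutation determines $\mathrm{CSL}(\vec H,\vec K)$ up to lattice isomorphism.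
   Context: For composition series $\vec H$, $\vec K$ of a group $G$, $\mathrm{CSL}(\vec H,\vec K)=\{H_i\cap K_j: 0\le i,j\le n\}$, ordered by inclusion; it is a lattice. For subnormal subgroups $A\triangleleft B$ and $C\triangleleft D$ of $G$, $B/A$ is subnormally down-and-up projective to $D/C$ if there are subnormal subgroups $X\triangleleft Y$ of $G$ with $AY=B$, $A\cap Y=X$, $CY=D$, $C\cap Y=X$. It is known (and used here) that for composition series $\vec H,\vec K$ of the same group there is a unique permutation $\pi$ of $\{1,\dots,n\}$ such that $H_i/H_{i-1}$ is subnormally down-and-up projective to $K_{\pi(i)}/K_{\pi(i)-1}$ for all $i$. *)

(* Defs.v *)
(* Groups are ABSTRACT, possibly infinite: a carrier type with operations
   and group axioms.  Subsets are Prop-valued predicates. *)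
From mathcomp Require Import all_boot all_fingroup.

Set Implicit Arguments.
Unset Strict Implicit.
Unset Printing Implicit Defensive.

Record absgroup := AbsGroup {
  gcar :> Type;
  gmul : gcar -> gcar -> gcar;
  gone : gcar;
  ginv : gcar -> gcar;
  gmulA : forall x y z, gmul x (gmul y z) = gmul (gmul x y) z;
  gmul1g : forall x, gmul gone x = x;
  gmulVg : forall x, gmul (ginv x) x = gone
}.

Arguments gone {a}.

Section GroupDefs.
Variable G : absgroup.

Definition gset := G -> Prop.

Definition gsubset (A B : gset) : Prop := forall x, A x -> B x.
Definition gseteq (A B : gset) : Prop := forall x, A x <-> B x.
Definition gsetI (A B : gset) : gset := fun x => A x /\ B x.
Definition gsetM (A B : gset) : gset :=
  fun x => exists a b, A a /\ B b /\ x = gmul a b.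
Definition gset1 : gset := fun x => x = gone.
Definition gsetT : gset := fun _ => True.

Definition is_subgroup (A : gset) : Prop :=
  [/\ A gone, (forall x y, A x -> A y -> A (gmul x y))
    & (forall x, A x -> A (ginv x))].

Definition gnormal (A B : gset) : Prop :=
  [/\ is_subgroup A, is_subgroup B, gsubset A B
    & forall a b, A a -> B b -> A (gmul (ginv b) (gmul a b))].

Inductive subnormal : gset -> Prop :=
  | subnormal_top : forall A, gseteq A gsetT -> subnormal A
  | subnormal_step : forall A B, gnormal A B -> subnormal B -> subnormal A.

(* B / A is a simple group, for A <| B:  A is a maximal proper normal
   subgroup of B (correspondence theorem) *)
Definition simple_factor (A B : gset) : Prop :=
  [/\ gnormal A B, ~ gseteq A B
    & forall N, gnormal N B -> gsubset A N -> gseteq N A \/ gseteq N B].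

Definition comp_series (n : nat) (H : nat -> gset) : Prop :=
  [/\ gseteq (H 0) gset1, gseteq (H n) gsetT
    & forall i, i < n -> simple_factor (H i) (H i.+1)].

Definition sdu_projective (A B C D : gset) : Prop :=
  [/\ subnormal A, subnormal B & gnormal A B] /\
  [/\ subnormal C, subnormal D & gnormal C D] /\
  exists X Y : gset,
    [/\ subnormal X, subnormal Y & gnormal X Y] /\
    [/\ gseteq (gsetM A Y) B, gseteq (gsetI A Y) X,
        gseteq (gsetM C Y) D & gseteq (gsetI C Y) X].

(* pi : permutation of {1..n}, encoded on 'I_n via i <-> i+1:
   H_{i+1}/H_i is projective to K_{pi(i)+1}/K_{pi(i)} for all i *)
Definition perm_projective (n : nat) (H K : nat -> gset)
    (pi : {perm 'I_n}) : Prop :=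
  forall i : 'I_n, sdu_projective (H i) (H i.+1) (K (pi i)) (K (pi i).+1).

Definition CSL (n : nat) (H K : nat -> gset) : Type :=
  {S : gset | exists i j, [/\ i <= n, j <= n & S = gsetI (H i) (K j)]}.

End GroupDefs.
Arguments perm_projective [G] n H K pi.

Arguments gset1 {G}.
Arguments gsetT {G}.

(* Main.v *)
Require Import Defs.
From mathcomp Require Import all_boot all_fingroup zify.
From Stdlib Require Import Classical ClassicalEpsilon FunctionalExtensionality PropExtensionality ProofIrrelevance.

Set Implicit Arguments.
Unset Strict Implicit.
Unset Printing Implicit Defensive.


Section Basics.
Variable G : absgroup.
Implicit Types x y z : G.

Lemma gmulgV x : gmul x (ginv x) = gone.
Proof.
rewrite -[gmul x _]gmul1g -{1}(gmulVg (ginv x)) -gmulA (gmulA (ginv x)).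
by rewrite gmulVg gmul1g gmulVg.
Qed.

Lemma gmulg1 x : gmul x gone = x.
Proof. by rewrite -(gmulVg x) gmulA gmulgV gmul1g. Qed.

Lemma gmulKg x y : gmul (ginv x) (gmul x y) = y.
Proof. by rewrite gmulA gmulVg gmul1g. Qed.

Lemma gmulKVg x y : gmul x (gmul (ginv x) y) = y.
Proof. by rewrite gmulA gmulgV gmul1g. Qed.

Lemma gmul_eq1 x y : gmul x y = gone -> y = ginv x.
Proof. by move=> e; rewrite -(gmulKg x y) e gmulg1. Qed.

Lemma ginvK x : ginv (ginv x) = x.
Proof. by symmetry; apply: gmul_eq1; rewrite gmulVg. Qed.

Lemma ginvM x y : ginv (gmul x y) = gmul (ginv y) (ginv x).
Proof.
symmetry; apply: gmul_eq1.
by rewrite -gmulA gmulKVg gmulgV.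
Qed.

Lemma ginv1 : ginv (@gone G) = gone.
Proof. by symmetry; apply: gmul_eq1; rewrite gmulg1. Qed.

Lemma seteq_eq (A B : gset G) : gsubset A B -> gsubset B A -> A = B.
Proof.
move=> h1 h2; apply: functional_extensionality => x.
by apply: propositional_extensionality; split; [apply: h1|apply: h2].
Qed.

Lemma subg_eq (A B : gset G) : gseteq A B -> is_subgroup A -> is_subgroup B.
Proof.
move=> e [h1 hM hV]; split.
- by apply/e.
- by move=> x y /e hx /e hy; apply/e; apply: hM.
- by move=> x /e hx; apply/e; apply: hV.
Qed.

Lemma subgT : is_subgroup (@gsetT G).
Proof. by []. Qed.

End Basics.


Section Generic.
Variables (G : absgroup) (n : nat) (X Y : nat -> gset G).
Hypothesis hX : comp_series n X.
Hypothesis hY : comp_series n Y.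

Lemma cs_sub (Z : nat -> gset G) : comp_series n Z -> forall i, i <= n -> is_subgroup (Z i).
Proof.
case=> Z0 Zn Zs i; rewrite leq_eqVlt => /orP [/eqP -> | lt].
  by apply: subg_eq (subgT G); move=> x; split=> h; [by apply/Zn| done].
by case: (Zs i lt) => [[]].
Qed.

Lemma cs_mono (Z : nat -> gset G) : comp_series n Z ->
  forall i i', i <= i' -> i' <= n -> gsubset (Z i) (Z i').
Proof.
move=> hZ i i' le; rewrite -(subnKC le); elim: (i' - i) => [|k IH].
  by rewrite addn0 => _ x.
rewrite addnS => lt x zx; case: hZ => _ _ Zs.
have := Zs (i + k) lt => -[[_ _ s _] _ _]; apply: s; apply: IH => //.
exact: ltnW.
Qed.

Lemma cs_one (Z : nat -> gset G) : comp_series n Z -> forall i, i <= n -> Z i gone.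
Proof. by move=> hZ i le; case: (cs_sub hZ le). Qed.

Definition P i j := exists x, X i.+1 x /\ Y j x /\ ~ X i x.

Lemma Pmono i j j' : P i j -> j <= j' -> j' <= n -> P i j'.
Proof.
move=> [x [h1 [h2 h3]]] le le'; exists x; split=> //; split=> //.
exact: (cs_mono hY le le').
Qed.

Lemma P0 i : i <= n -> ~ P i 0.
Proof.
move=> le [x [_ [h2 h3]]]; case: hY => Y0 _ _.
have e : x = gone by apply/Y0.
by apply: h3; rewrite e; apply: cs_one.
Qed.

Definition M i j := gsetM (X i) (gsetI (X i.+1) (Y j)).

Lemma Mchain i : i < n -> forall k, k <= n ->
  gseteq (M i (n - k)) (X i) \/ gseteq (M i (n - k)) (X i.+1).
Proof.
move=> lt; have [_ _ Xs] := hX; have [Y0 Yn Ys] := hY.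
have [[sA sB sAB nAB] nq mx] := Xs i lt.
have [A1 AM AV] := sA; have [B1 BM BV] := sB.
elim=> [|k IH] lek.
  right; rewrite subn0 => x; split.
    by move=> [a [y [ha [[hy _] ->]]]]; apply: (BM) => //; apply: sAB.
  move=> hx; exists gone, x; split=> //; split; last by rewrite gmul1g.
  by split=> //; apply/Yn.
have jlt : n - k.+1 < n by lia.
have jS : (n - k.+1).+1 = n - k by lia.
have [[sC sD sCD nCD] _ _] := Ys _ jlt.
rewrite jS in sD sCD nCD.
set j := n - k.+1.
have MS : gsubset (M i j) (M i (n - k)).
  move=> x [a [y [ha [[hy1 hy2] ->]]]]; exists a, y; split=> //; split=> //.
  by split=> //; apply: sCD.
have AM' : gsubset (X i) (M i j).
  move=> a ha; exists a, gone; split=> //; split; last by rewrite gmulg1.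
  by split=> //; apply: cs_one => //; exact: ltnW.
have [IH1|IH2] := IH (ltnW lek).
  left => x; split; first by move=> /MS /IH1.
  exact: AM'.
apply: mx => //.
have [C1 CM CV] := sC.
have conjA : forall a y, X i a -> X i.+1 y -> X i (gmul y (gmul a (ginv y))).
  move=> a y ha hy; have := nAB a (ginv y) ha (BV _ hy); by rewrite ginvK.
split.
- split.
  + exists gone, gone; split; first exact: A1.
    split; first by split.
    by rewrite gmulg1.
  + move=> x1 x2 [a1 [y1 [ha1 [[hy1 hy1'] ->]]]] [a2 [y2 [ha2 [[hy2 hy2'] ->]]]].
    exists (gmul a1 (gmul y1 (gmul a2 (ginv y1)))), (gmul y1 y2); split.
      by apply: (AM) => //; apply: conjA.
    split; first by split; [apply: (BM)| apply: (CM)].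
    by rewrite -!gmulA gmulKg.
  + move=> x [a [y [ha [[hy hy'] ->]]]].
    exists (gmul (ginv y) (gmul (ginv a) y)), (ginv y); split.
      by apply: nAB => //; apply: AV.
    split; first by split; [apply: BV| apply: CV].
    by rewrite ginvM -!gmulA gmulgV gmulg1.
- done.
- by move=> x [a [y [ha [[hy _] ->]]]]; apply: (BM) => //; apply: sAB.
- move=> m b [a [y [ha [[hy hy'] ->]]]] /IH2 [a2 [d [ha2 [[hd hd'] ->]]]].
  exists (gmul (ginv d) (gmul (gmul (ginv a2) (gmul a (gmul y (gmul a2 (ginv y))))) d)),
         (gmul (ginv d) (gmul y d)).
  split.
    apply: nAB => //; apply: (AM); first exact: AV.
    by apply: (AM) => //; apply: conjA.
  split.
    split; first by apply: (BM); [apply: BV| apply: (BM)].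
    by apply: nCD.
  by rewrite ginvM -!gmulA gmulKVg gmulKg.
Qed.

Lemma Slemma i j : i < n -> j <= n -> P i j -> forall x, X i.+1 x -> M i j x.
Proof.
move=> lt le [y [hy1 [hy2 hy3]]] x hx.
have := Mchain lt (leq_subr j n); rewrite subKn //.
case=> [e|e]; last by apply/e.
exfalso; apply: hy3; apply/e; exists gone, y; split.
  by apply: cs_one => //; exact: ltnW.
by split; [split| rewrite gmul1g].
Qed.

Definition Q i j := exists x, X i.+1 x /\ Y j.+1 x /\
  ~ gsetM (gsetI (X i) (Y j.+1)) (gsetI (X i.+1) (Y j)) x.

Lemma jumpQ i j : i < n -> j < n -> (~ P i j /\ P i j.+1) <-> Q i j.
Proof.
move=> lti ltj; have [_ _ Xs] := hX; have [_ _ Ys] := hY; split.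
  move=> [nP [x [h1 [h2 h3]]]]; exists x; split=> //; split=> //.
  move=> [a [y [[ha _] [[hy1 hy2] e]]]].
  have hy : X i y.
    apply: NNPP => ny; apply: nP; by exists y.
  apply: h3; rewrite e; have [[sA _ _ _] _ _] := (Xs i lti).
  by case: sA => _ AM _; apply: (AM).
move=> [x [h1 [h2 h3]]]; split.
  move=> hP; have [a [y [ha [[hy1 hy2] e]]]] := Slemma lti (ltnW ltj) hP h1.
  apply: h3; exists a, y; split; last by [].
  split=> //.
  have -> : a = gmul x (ginv y) by rewrite e -gmulA gmulgV gmulg1.
  have [[_ sD sCD _] _ _] := (Ys j ltj).
  case: sD => _ DM DV; apply: (DM) => //; apply: (DV); exact: sCD.
exists x; split=> //; split=> // hx; apply: h3.
exists x, gone; split=> //; split; last by rewrite gmulg1.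
by split; apply: cs_one => //; apply: ltnW.
Qed.

End Generic.

Lemma swapM (G : absgroup) (A B C D : gset G) :
  gnormal A B -> gsubset C D -> is_subgroup D ->
  forall x, gsetM (gsetI A D) (gsetI B C) x -> gsetM (gsetI C B) (gsetI D A) x.
Proof.
move=> [_ [_ BM BV] _ nAB] sCD [_ DM DV] x [a [y [[ha hda] [[hy hyc] ->]]]].
exists y, (gmul (ginv y) (gmul a y)); split=> //; split; last by rewrite gmulKVg.
split; last by apply: nAB.
by apply: (DM); [apply: (DV); apply: sCD| apply: (DM) => //; apply: sCD].
Qed.

Lemma Qswap (G : absgroup) n (X Y : nat -> gset G) i j :
  comp_series n X -> comp_series n Y -> i < n -> j < n ->
  Q X Y i j <-> Q Y X j i.
Proof.
move=> hX hY lti ltj; have [_ _ Xs] := hX; have [_ _ Ys] := hY.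
have [nX _ _] := Xs i lti.
have [nY _ _] := Ys j ltj.
have [[_ sBX sXX _] _ _] := Xs i lti.
have [[_ sBY sYY _] _ _] := Ys j ltj.
split=> -[x [h1 [h2 h3]]]; exists x; split=> //; split=> // h; apply: h3.
  by apply: (swapM nY sXX sBX).
by apply: (swapM nX sYY sBY).
Qed.


Lemma critX (G : absgroup) n (X Y : nat -> gset G) (rho : 'I_n -> 'I_n) :
  comp_series n X -> comp_series n Y ->
  (forall (i : 'I_n) j, j <= n -> (P X Y i j <-> rho i < j)) ->
  forall i j i', i <= n -> j <= n -> i' <= n ->
  (gsubset (gsetI (X i) (Y j)) (X i') <->
   forall m : 'I_n, m < i -> rho m < j -> m < i').
Proof.
move=> hX hY hP i j i' lei lej lei'; split.
  move=> sub m lmi lrj; apply: NNPP => nm.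
  have [x [h1 [h2 h3]]] := (hP m j lej).2 lrj.
  move/negP: nm; rewrite -leqNgt => nm.
  apply: h3; apply: (cs_mono hX nm (ltnW (ltn_ord m))).
  by apply: sub; split=> //; exact: (cs_mono hX lmi lei h1).
elim: i lei => [|k IH] lek hyp.
  by move=> x [h _]; exact: (cs_mono hX (leq0n i') lei' h).
case: (leqP k.+1 i') => le.
  by move=> x [h _]; exact: (cs_mono hX le lei' h).
have ltk : k < n by [].
have nP : ~ P X Y k j.
  move=> /(hP (Ordinal ltk) j lej) /= lr.
  have h := hyp (Ordinal ltk) (ltnSn k) lr. by rewrite ltnS leqNgt h in le.
move=> x [h1 h2]; apply: (IH (ltnW lek)).
  by move=> m lm lr; apply: hyp => //; apply: ltnW.
split=> //; apply: NNPP => nx; apply: nP; by exists x.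
Qed.

Lemma perm_le_eq n (s : 'I_n -> 'I_n) (p : {perm 'I_n}) :
  injective s -> (forall i, s i <= p i) -> forall i, s i = p i :> nat.
Proof.
move=> inj le.
have E1 : \sum_(i : 'I_n) (s i : nat) = \sum_(i : 'I_n) (i : nat) by rewrite [RHS](reindex_inj inj).
have E2 : \sum_(i : 'I_n) (p i : nat) = \sum_(i : 'I_n) (i : nat) by rewrite [RHS](reindex_inj (@perm_inj _ p)).
have h := leqif_sum (fun i (_ : true) => leqif_eq (le i)).
move: h.2; rewrite E1 E2 eqxx => /esym /forallP hf i.
by apply/eqP; apply: (implyP (hf i)).
Qed.


Section Spec.
Variables (G : absgroup) (n : nat) (H K : nat -> gset G) (pi : {perm 'I_n}).
Hypotheses (hH : comp_series n H) (hK : comp_series n K)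
  (hpi : perm_projective n H K pi).

Lemma Pproj (i : 'I_n) : P H K i (pi i).+1.
Proof.
have [[_ _ nAB] [[_ _ nCD] [Xs [Ys [_ [eB _ eD _]]]]]] := hpi i.
have [_ _ Hs] := hH.
have [[sA _ sAB _] nq _] := Hs i (ltn_ord i).
have [sC _ _ _] := nCD.
have [A1 AM _] := sA; have [C1 _ _] := sC.
apply: NNPP => nP; apply: nq => x; split; first by apply: sAB.
move=> /eB [a [y [ha [hy ->]]]].
have yA : H i y.
  apply: NNPP => ny; apply: nP; exists y; split.
    by apply/eB; exists gone, y; split; [exact: A1| split=> //; rewrite gmul1g].
  split=> //; apply/eD; exists gone, y; split; first exact: C1.
  by split=> //; rewrite gmul1g.
by apply: AM.
Qed.

Definition pb (i : 'I_n) (j : nat) : bool :=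
  if excluded_middle_informative (P H K i j.+1) then true else false.

Lemma pbP (i : 'I_n) (j : nat) : pb i j <-> P H K i j.+1.
Proof. by rewrite /pb; case: excluded_middle_informative. Qed.

Lemma exP (i : 'I_n) : exists j, pb i j.
Proof. by exists (pi i); apply/pbP; apply: Pproj. Qed.

Definition sigm (i : 'I_n) := ex_minn (exP i).

Lemma sig_le (i : 'I_n) : sigm i <= pi i.
Proof. rewrite /sigm; case: ex_minnP => m _; apply; apply/pbP; apply: Pproj. Qed.

Lemma sig_lt (i : 'I_n) : sigm i < n.
Proof. exact: leq_ltn_trans (sig_le i) (ltn_ord _). Qed.

Lemma sigP (i : 'I_n) : P H K i (sigm i).+1.
Proof. by rewrite /sigm; case: ex_minnP => m /pbP. Qed.

Lemma sig_nP (i : 'I_n) : ~ P H K i (sigm i).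
Proof.
rewrite /sigm; case: ex_minnP => m _ hm.
case: m hm => [|m] hm; first exact: (P0 hH hK (ltnW (ltn_ord i))).
move=> /(pbP i m) /hm; by rewrite ltnn.
Qed.

Lemma jumpK (i : 'I_n) : ~ P K H (sigm i) i /\ P K H (sigm i) i.+1.
Proof.
apply/(jumpQ hK hH (sig_lt i) (ltn_ord i)).
apply/(Qswap hH hK (ltn_ord i) (sig_lt i)).
apply/(jumpQ hH hK (ltn_ord i) (sig_lt i)).
by split; [apply: sig_nP| apply: sigP].
Qed.

Definition sigo (i : 'I_n) : 'I_n := Ordinal (sig_lt i).

Lemma sigo_inj : injective sigo.
Proof.
move=> i i' /(congr1 val) /= e.
have [n1 p1] := jumpK i; have [n2 p2] := jumpK i'.
rewrite e in n1 p1.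
apply: val_inj; case: (ltngtP i i') => // lt; exfalso.
  by apply: n2; apply: (Pmono hH p1 lt); exact: ltnW.
by apply: n1; apply: (Pmono hH p2 lt); exact: ltnW.
Qed.

Lemma sig_eq (i : 'I_n) : sigm i = pi i.
Proof. exact: (perm_le_eq sigo_inj sig_le). Qed.

Lemma PHK_iff (i : 'I_n) j : j <= n -> (P H K i j <-> pi i < j).
Proof.
move=> le; rewrite -sig_eq; split.
  move=> hP; rewrite ltnNge; apply/negP => lj.
  by apply: (@sig_nP i); apply: (Pmono hK hP lj); exact: ltnW (sig_lt i).
by move=> lt; apply: (Pmono hK (sigP i) lt le).
Qed.

Lemma PKH_iff (j : 'I_n) i : i <= n -> (P K H j i <-> (pi^-1)%g j < i).
Proof.
move=> le; set i0 := (pi^-1)%g j.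
have e : sigm i0 = j by rewrite sig_eq /i0 permKV.
have [n1 p1] := jumpK i0; rewrite e in n1 p1.
split.
  move=> hP; rewrite ltnNge; apply/negP => li.
  by apply: n1; apply: (Pmono hH hP li); exact: ltnW (ltn_ord i0).
by move=> lt; apply: (Pmono hH p1 lt le).
Qed.

Lemma crit_main i j i' j' : i <= n -> j <= n -> i' <= n -> j' <= n ->
  (gsubset (gsetI (H i) (K j)) (gsetI (H i') (K j')) <->
   forall m : 'I_n, m < i -> pi m < j -> m < i' /\ pi m < j').
Proof.
move=> li lj li' lj'.
have cH := critX hH hK PHK_iff li lj li'.
have cK := critX hK hH PKH_iff lj li lj'.
split.
  move=> sub m lm lp; split.
    by apply: (cH.1 _ m lm lp) => x hx; case: (sub x hx).
  apply: (cK.1 _ (pi m)); last by rewrite permK.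
    by move=> x [hx1 hx2]; case: (sub x (conj hx2 hx1)).
  by [].
move=> hc x [hx1 hx2]; split.
  apply: (cH.2 _ x (conj hx1 hx2)) => m lm lp; exact: (hc m lm lp).1.
apply: (cK.2 _ x (conj hx2 hx1)) => m lm lp.
have := (hc ((pi^-1)%g m) lp); rewrite permKV => h; exact: (h lm).2.
Qed.

End Spec.


Definition crit n (pi : {perm 'I_n}) (i j i' j' : nat) : Prop :=
  forall m : 'I_n, m < i -> pi m < j -> m < i' /\ pi m < j'.

Lemma csl_eq (G : absgroup) n (H K : nat -> gset G) (S T : CSL n H K) :
  sval S = sval T -> S = T.
Proof.
case: S => s hs; case: T => t ht /= e; subst t; f_equal; apply: proof_irrelevance.
Qed.

Section Map.
Variables (Ga Gb : absgroup) (n : nat) (Ha Ka : nat -> gset Ga) (Hb Kb : nat -> gset Gb).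

Definition idx (S : CSL n Ha Ka) :
  {p : nat * nat | [/\ p.1 <= n, p.2 <= n & sval S = gsetI (Ha p.1) (Ka p.2)]}.
Proof.
apply: constructive_indefinite_description.
have [i [j [h1 h2 h3]]] := svalP S.
by exists (i, j).
Defined.

Definition cslmap (S : CSL n Ha Ka) : CSL n Hb Kb.
Proof.
refine (exist _ (gsetI (Hb (sval (idx S)).1) (Kb (sval (idx S)).2)) _).
have [h1 h2 _] := svalP (idx S).
by exists (sval (idx S)).1, (sval (idx S)).2.
Defined.

Lemma cslmap_spec (S : CSL n Ha Ka) : exists i j, [/\ i <= n, j <= n,
  sval S = gsetI (Ha i) (Ka j) & sval (cslmap S) = gsetI (Hb i) (Kb j)].
Proof.
have [h1 h2 h3] := svalP (idx S).
by exists (sval (idx S)).1, (sval (idx S)).2.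
Qed.
End Map.

Section Transfer.
Variables (G1 G2 : absgroup) (n : nat) (H1 K1 : nat -> gset G1)
  (H2 K2 : nat -> gset G2) (pi : {perm 'I_n}).
Hypothesis c1 : forall i j i' j', i <= n -> j <= n -> i' <= n -> j' <= n ->
  (gsubset (gsetI (H1 i) (K1 j)) (gsetI (H1 i') (K1 j')) <-> crit pi i j i' j').
Hypothesis c2 : forall i j i' j', i <= n -> j <= n -> i' <= n -> j' <= n ->
  (gsubset (gsetI (H2 i) (K2 j)) (gsetI (H2 i') (K2 j')) <-> crit pi i j i' j').

Let f := cslmap (n:=n) (Ha:=H1) (Ka:=K1) H2 K2.
Let g := cslmap (n:=n) (Ha:=H2) (Ka:=K2) H1 K1.

Lemma f_mono (S T : CSL n H1 K1) :
  gsubset (sval S) (sval T) <-> gsubset (sval (f S)) (sval (f T)).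
Proof.
have [i [j [li lj e1 e2]]] := cslmap_spec H2 K2 S.
have [i' [j' [li' lj' e1' e2']]] := cslmap_spec H2 K2 T.
rewrite /f e1 e2 e1' e2'.
by rewrite c1 // c2.
Qed.

Lemma gf (S : CSL n H1 K1) : g (f S) = S.
Proof.
apply: csl_eq.
have [i [j [li lj e1 e2]]] := cslmap_spec H2 K2 S.
have [i' [j' [li' lj' e1' e2']]] := cslmap_spec H1 K1 (f S).
rewrite e1 e2'.
rewrite /f e2 in e1'.
apply: seteq_eq.
  by apply/c1 => //; apply/c2 => //; rewrite e1'.
by apply/c1 => //; apply/c2 => //; rewrite e1'.
Qed.

End Transfer.

Lemma transfer (G1 G2 : absgroup) (n : nat) (H1 K1 : nat -> gset G1)
  (H2 K2 : nat -> gset G2) (pi : {perm 'I_n}) :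
  (forall i j i' j', i <= n -> j <= n -> i' <= n -> j' <= n ->
  (gsubset (gsetI (H1 i) (K1 j)) (gsetI (H1 i') (K1 j')) <-> crit pi i j i' j')) ->
  (forall i j i' j', i <= n -> j <= n -> i' <= n -> j' <= n ->
  (gsubset (gsetI (H2 i) (K2 j)) (gsetI (H2 i') (K2 j')) <-> crit pi i j i' j')) ->
  exists f : CSL n H1 K1 -> CSL n H2 K2,
    bijective f /\
    forall S T : CSL n H1 K1,
      gsubset (sval S) (sval T) <-> gsubset (sval (f S)) (sval (f T)).
Proof.
move=> c1 c2.
exists (cslmap (n:=n) (Ha:=H1) (Ka:=K1) H2 K2); split; last exact: f_mono c1 c2.
exists (cslmap (n:=n) (Ha:=H2) (Ka:=K2) H1 K1).
  move=> S; exact: (gf c1 c2 S).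
move=> S; exact: (gf c2 c1 S).
Qed.

Theorem corollary3p4 (G1 G2 : absgroup) (n : nat)
    (H1 K1 : nat -> gset G1) (H2 K2 : nat -> gset G2)
    (pi1 pi2 : {perm 'I_n}) :
  comp_series n H1 -> comp_series n K1 ->
  comp_series n H2 -> comp_series n K2 ->
  perm_projective n H1 K1 pi1 -> perm_projective n H2 K2 pi2 ->
  pi1 = pi2 ->
  exists f : CSL n H1 K1 -> CSL n H2 K2,
    bijective f /\
    forall S T : CSL n H1 K1,
      gsubset (sval S) (sval T) <-> gsubset (sval (f S)) (sval (f T)).
Proof.
move=> hH1 hK1 hH2 hK2 p1 p2 e; subst pi2.
apply: (@transfer _ _ _ _ _ _ _ pi1).
  move=> i j i' j' li lj li' lj'; exact (crit_main hH1 hK1 p1 li lj li' lj').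
move=> i j i' j' li lj li' lj'; exact (crit_main hH2 hK2 p2 li lj li' lj').
Qed.
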